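(* Let $f\in\mathcal{C}(\mathbb{R}^{\mathbb{N}})$ and $x_{0}\in\mathbb{R}^{\mathbb{N}}$ such that $f(x_{0})\neq 0$. Then, $f\notin L^{p}(\mu)$ for every $1\leq p < \infty$. In particular, it holds that $\mathcal{C}(\mathbb{R}^{\mathbb{N}})\cap L^{p}(\mu)=\{0\}$ for each $1\leq p < \infty$.
   Context: $\mathcal{C}(\mathbb{R}^{\mathbb{N}})$ denotes the space of continuous functions $f:\mathbb{R}^{\mathbb{N}}\to\mathbb{R}$, where $\mathbb{R}^{\mathbb{N}}$ carries the product topology. Let $\mathcal{B}$ be the Borel $\sigma$-algebra of $\mathbb{R}$, $\lambda$ the Lebesgue measure, and $\mathcal{B}_{\infty}$ the $\sigma$-algebra on $\mathbb{R}^{\mathbb{N}}$ generated by the cylinder sets $\prod_{i=1}^{m}C_{i}\times\prod_{i=m+1}^{\infty}\mathbb{R}$ with $C_i\in\mathcal{B}$, $m\in\mathbb{N}$ (equal to the Borel $\sigma$-algebra of the product topology). Let $\mathcal{F}(\mathcal{B},\lambda)$ be the set of finite rectangles $\prod_{i\in\mathbb{N}}C_{i}$ with $C_i\in\mathcal{B}$ and $\prod_{i}\lambda(C_i)\in[0,\infty)$, with $\mathrm{vol}(\prod_{i}C_i):=\prod_i\lambda(C_i)$. The measure $\mu$ is the restriction to $\mathcal{B}_{\infty}$ of the outer measure $\mu^{\ast}(A):=\inf\{\sum_{n}\mathrm{vol}(\mathscr{C}_{n}) : \mathscr{C}_{n}\in\mathcal{F}(\mathcal{B},\lambda),\ A\subset\bigcup_{n}\mathscr{C}_{n}\}$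 ($\inf\varnothing=\infty$). *)

(* Defs.v *)
From HB Require Import structures.
From mathcomp Require Import all_boot all_order all_algebra.
From mathcomp Require Import all_classical all_reals all_analysis.
Set Implicit Arguments. Unset Strict Implicit. Unset Printing Implicit Defensive.
Import Order.TTheory GRing.Theory Num.Theory.
Import numFieldNormedType.Exports.
Local Open Scope classical_set_scope.
Local Open Scope ring_scope.

(* Coordinates of R^N are indexed by nat (0-based instead of 1-based). *)

Definition cylinders (R : realType) : set (set (nat -> R)) :=
  [set A | exists (m : nat) (C : nat -> set R),
      (forall i, (i < m)%N -> measurable (C i)) /\
      A = [set x | forall i, (i < m)%N -> C i (x i)]].

Definition RN (R : realType) := g_sigma_algebraType (@cylinders R).

Definition rect (R : realType) (C : nat -> set R) : set (nat -> R) :=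
  [set x | forall i, C i (x i)].

Definition pprod (R : realType) (C : nat -> set R) (n : nat) : \bar R :=
  (\prod_(i < n) (@lebesgue_measure R) (C i))%E.

Definition finite_rect (R : realType) (C : nat -> set R) : Prop :=
  (forall i, measurable (C i)) /\ exists r : R, pprod C @ \oo --> r%:E.

Definition vol (R : realType) (C : nat -> set R) : \bar R := limn (pprod C).

Definition mu_star (R : realType) (A : set (nat -> R)) : \bar R :=
  ereal_inf [set (\sum_(0 <= n <oo) vol (Cs n))%E |
    Cs in [set Cs : nat -> nat -> set R |
            (forall n, finite_rect (Cs n)) /\ A `<=` \bigcup_n rect (Cs n)]].

(* Main.v *)
Require Import Defs.
From HB Require Import structures.
From mathcomp Require Import all_boot all_order all_algebra finmap.
From mathcomp Require Import all_classical all_reals all_analysis.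
From mathcomp Require Import lra measurable_realfun.
Import Order.TTheory GRing.Theory Num.Theory.
Import numFieldNormedType.Exports.
Local Open Scope classical_set_scope.
Local Open Scope ring_scope.
Set Implicit Arguments. Unset Strict Implicit.
Definition cylnb (R : realType) (x0 : nat -> R) (S : set (nat -> R)) :=
  exists m : nat, exists2 d : R, 0 < d & forall x : nat -> R, (forall i, (i < m)%N -> `|x i - x0 i| < d) -> S x.

Lemma cylnb_seq (R : realType) (x0 : nat -> R) (K : eqType) (b : K -> set (nat -> R)) (s : seq K) :
  (forall E, E \in s -> cylnb x0 (b E)) -> cylnb x0 [set x | forall E, E \in s -> b E x].
Proof.
elim: s => [|E s IH] H.
  by exists 0%N; exists 1 => // x _ E.
have [m1 [d1 d10 H1]] := H E (mem_head _ _).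
have [m2 [d2 d20 H2]] : cylnb x0 [set x | forall E, E \in s -> b E x].
  by apply: IH => F Fs; apply: H; rewrite in_cons Fs orbT.
exists (maxn m1 m2); exists (Num.min d1 d2); first by rewrite lt_min d10.
move=> x Hx F; rewrite in_cons => /orP [/eqP ->|Fs].
  apply: H1 => i im; apply: (lt_le_trans (Hx i _)); first by rewrite (leq_trans im) // leq_maxl.
  by rewrite ge_min lexx.
apply: (H2 x) => // i im; apply: (lt_le_trans (Hx i _)); first by rewrite (leq_trans im) // leq_maxr.
by rewrite ge_min lexx orbT.
Qed.
Lemma cylnb_fset (R : realType) (x0 : nat -> R) (K : choiceType) (b : K -> set (nat -> R)) (D : {fset K}) :
  (forall E, E \in D -> cylnb x0 (b E)) -> cylnb x0 (\bigcap_(i in [set` D]) b i).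
Proof.
move=> H; have [m [d d0 H1]] := cylnb_seq (H : forall E, E \in (D : seq K) -> _).
by exists m; exists d => // x /H1 Hx i Di; apply: Hx.
Qed.
Lemma nbhs_cyl (R : realType) (x0 : {ptws nat -> R}) (A : set {ptws nat -> R}) :
  nbhs x0 A -> cylnb x0 A.
Proof.
rewrite nbhsE /=.
move=> [_ [[B sB <-] [C BC Ct] sUBA]].
have /sB [D sD IDeC] := BC.
suff : cylnb x0 C.
  move=> [m [d d0 H]]; exists m; exists d => // x /H Cx; apply: sUBA; by exists C.
move: Ct; rewrite -IDeC => Ct.
apply: cylnb_fset => E ED.
have := sD E ED. have := Ct E ED.
move=> Ex0 /set_mem [i _ oE].
case: oE => O oO OE; rewrite -OE in Ex0 *.
have : nbhs (x0 i) O by move: oO; rewrite openE => /(_ _ Ex0).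
case/nbhs_ballP => e e0 H.
exists i.+1; exists e => // x Hx; apply: H.
by rewrite -ball_normE /= distrC; apply: Hx.
Qed.
Lemma leb_setT (R : realType) : (@lebesgue_measure R) setT = +oo%E.
Proof. by rewrite -set_itvNyy lebesgue_measure_itv /=. Qed.

Lemma leb_mono (R : realType) (A B : set R) : measurable A -> measurable B -> A `<=` B ->
  ((@lebesgue_measure R) A <= (@lebesgue_measure R) B)%E.
Proof. by move=> mA mB AB; apply: le_measure => //; rewrite inE. Qed.

Lemma avoid_fin (R : realType) (N G : set R) :
  (@lebesgue_measure R).-negligible N -> measurable G -> ((@lebesgue_measure R) G < +oo)%E ->
  exists y, ~ N y /\ ~ G y.
Proof.
move=> [N' [mN' N0 NN']] mG Gfin.
apply: contrapT => H.
have sT : setT `<=` N' `|` G.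
  move=> y _; apply: contrapT => /not_orP [h1 h2]; apply: H; exists y; split => //.
  by move=> /NN'.
have : ((@lebesgue_measure R) setT <= (@lebesgue_measure R) (N' `|` G))%E.
  by apply: le_measure => //; rewrite inE //; exact: measurableU.
move/le_trans => /(_ _ (measureU2 (@lebesgue_measure R) mN' mG)).

by rewrite (_ : _ N' = 0%E); last exact: N0; rewrite leb_setT add0e leye_eq => /eqP h2; move: Gfin; rewrite h2 ltxx.
Qed.

Lemma avoid_itv (R : realType) (N : set R) (a d : R) : 0 < d ->
  (@lebesgue_measure R).-negligible N -> exists y, `|y - a| < d /\ ~ N y.
Proof.
move=> d0 [N' [mN' N0 NN']].
apply: contrapT => H.
have sI : [set` `]a - d, a + d[] `<=` N'.
  move=> y; rewrite /= in_itv /= => Hy; apply: contrapT => h2; apply: H; exists y; split.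
    by rewrite ltr_distl.
  by move=> /NN'.
have := leb_mono (measurable_itv _) mN' sI.
have hlt : a - d < a + d by rewrite ltrD2l gt0_cp.
rewrite N0 lebesgue_measure_itv /= lte_fin hlt -EFinD lee_fin.
by rewrite subr_le0 leNgt hlt.
Qed.
Lemma dichot (R : realType) (C : nat -> set R) : finite_rect C ->
  (exists j, (@lebesgue_measure R) (C j) = 0%E) \/
  (forall k, exists i, (k <= i)%N /\ ((@lebesgue_measure R) (C i) < +oo)%E).
Proof.
move=> [mC [r cv]]; apply: contrapT => /not_orP [h1 /existsNP [k hk]].
have pos : forall i, (0 < (@lebesgue_measure R) (C i))%E.
  move=> i; rewrite lt0e measure_ge0 andbT; apply/eqP => h; apply: h1; by exists i.
have inf : forall i, (k <= i)%N -> (@lebesgue_measure R) (C i) = +oo%E.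
  move=> i ki; apply/eqP; rewrite eq_le leey /= leNgt; apply/negP => h.
  by apply: hk; exists i.
have ppos : forall n, (0 < pprod C n)%E.
  elim=> [|n IH]; first by rewrite /pprod big_ord0 lte01.
  by rewrite /pprod big_ord_recr /= mule_gt0.
have pinf : forall n, (k <= n)%N -> pprod C n.+1 = +oo%E.
  move=> n kn; rewrite /pprod big_ord_recr /= (inf n kn) muleC gt0_mulye //; exact: ppos.
case/fine_cvgP: cv => [[N _ HN] _].
have := HN (maxn N k).+1 _; rewrite pinf ?leq_maxr //.
move=> H; suff : (+oo%E : \bar R) \is a fin_num by [].
by apply: H; rewrite /= ltnW // ltnS leq_maxl.
Qed.

Lemma no_cover (R : realType) (a : nat -> R) (d : R) (m : nat) (Cs : nat -> nat -> set R) :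
  0 < d -> (forall n, finite_rect (Cs n)) ->
  exists x : nat -> R, (forall i, (i < m)%N -> `|x i - a i| < d) /\ (forall n, ~ rect (Cs n) x).
Proof.
move=> d0 fr.
pose fin n := forall k, exists i, (k <= i)%N /\ ((@lebesgue_measure R) (Cs n i) < +oo)%E.
have g : forall n k, {i | (k <= i)%N /\ (fin n -> ((@lebesgue_measure R) (Cs n i) < +oo)%E)}.
  move=> n k; apply: cid; case: (pselect (fin n)) => [fn|nf].
    by have [i [ki hi]] := fn k; exists i; split.
  by exists k; split.
pose idx := fix idx n := if n is n'.+1 then sval (g n (idx n').+1) else sval (g 0%N m).
have idx_lt : forall n, (idx n < idx n.+1)%N.
  by move=> n; rewrite /=; case: (g _ _) => i [].
have mono : {homo idx : i j / (i < j)%N}.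
  by apply: homo_ltn => //; exact: ltn_trans.
have idx_inj : injective idx.
  move=> n n' e; case: (ltngtP n n') => // h; have := mono _ _ h; by rewrite e ltnn.
have idx_ge : forall n, (m <= idx n)%N.
  elim=> [|n IH]; first by rewrite /=; case: (g _ _) => i [].
  by rewrite (leq_trans IH) // ltnW.
have idx_fin : forall n, fin n -> ((@lebesgue_measure R) (Cs n (idx n)) < +oo)%E.
  by case=> [|n]; rewrite /=; case: (g _ _) => i [].
pose Nset j := \bigcup_n (if pselect ((@lebesgue_measure R) (Cs n j) = 0%E) is left _ then Cs n j else set0).
have Nneg : forall j, (@lebesgue_measure R).-negligible (Nset j).
  move=> j; apply: negligible_bigcup => n; case: pselect => h.
    by exists (Cs n j); split => //; exact: (fr n).1.
  by exists set0; split => //; rewrite measure0.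
pose Fset i := [set y | exists n, idx n = i /\ fin n /\ Cs n i y].
have hx : forall i, {y | ((i < m)%N -> `|y - a i| < d) /\ ~ Nset i y /\ ((m <= i)%N -> ~ Fset i y)}.
  move=> i; apply: cid; case: (ltnP i m) => im.
    have [y [h1 h2]] := avoid_itv (a i) d0 (Nneg i).
    by exists y; split => //; split => // mi; rewrite leqNgt im in mi.
  case: (pselect (exists n, idx n = i /\ fin n)) => [[n0 [e0 f0]]|nex].
    have hf : ((@lebesgue_measure R) (Cs n0 i) < +oo)%E by rewrite -e0; exact: idx_fin.
    have [y [h1 h2]] := avoid_fin (Nneg i) ((fr n0).1 i) hf.
    exists y; split; first by [].
    split => // _ [n [e [fn Cy]]]; apply: h2.
    by have <- : n = n0 by apply: idx_inj; rewrite e e0.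
  have hf : ((@lebesgue_measure R) set0 < +oo)%E by rewrite measure0.
  have [y [h1 h2]] := avoid_fin (Nneg i) (@measurable0 _ R) hf.
  exists y; split; first by [].
  by split => // _ [n [e [fn Cy]]]; apply: nex; exists n.
pose x i := sval (hx i).
exists x; split.
  by move=> i im; exact: (svalP (hx i)).1 im.
move=> n rx; case: (pselect (fin n)) => fn.
  apply: ((svalP (hx (idx n))).2.2 (idx_ge n)); exists n; split => //; split => //.
have [[j j0]|//] := dichot (fr n).
apply: (svalP (hx j)).2.1; exists n => //.
by case: pselect => [_|/(_ j0) //]; exact: rx.
Qed.

Lemma cyl_measurable (R : realType) (a : nat -> R) (d : R) (m : nat) :
  measurable ([set x | forall i, (i < m)%N -> `|x i - a i| < d] : set (RN R)).
Proof.
apply: sub_gen_smallest; exists m, (fun i => [set y : R | `|y - a i| < d]); split => //.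
move=> i _; rewrite (_ : [set y | _] = [set` `]a i - d, a i + d[]); first exact: measurable_itv.
by apply/seteqP; split => y /=; rewrite in_itv /= ltr_distl.
Qed.

Lemma cyl_infinite (R : realType) (mu : {measure set RN R -> \bar R})
  (mu_def : forall A : set (RN R), measurable A -> mu A = mu_star A)
  (a : nat -> R) (d : R) (m : nat) : 0 < d ->
  mu ([set x | forall i, (i < m)%N -> `|x i - a i| < d] : set (RN R)) = +oo%E.
Proof.
move=> d0; rewrite mu_def; last exact: cyl_measurable.
rewrite /mu_star; set S := (X in ereal_inf X).
suff -> : S = set0 by rewrite ereal_inf0.
apply/seteqP; split => // y [Cs [fr cov] _].
have [x [xU xn]] := no_cover a m d0 fr.
by have [n _ /xn] := cov x xU.
Qed.

Lemma part1 (R : realType) (mu : {measure set RN R -> \bar R})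
  (mu_def : forall A : set (RN R), measurable A -> mu A = mu_star A)
  (f : (nat -> R) -> R) (x0 : nat -> R) :
  continuous (f : {ptws nat -> R} -> R) -> f x0 != 0 ->
  forall p : R, 1 <= p -> ~ ((f : RN R -> R) \in Lfun mu p%:E).
Proof.
move=> cf fx0 p p1 /andP [mf ff].
have mf' : measurable_fun setT (f : RN R -> R) by move: mf; rewrite inE.
move: ff; rewrite inE /= /finite_norm => ff.
pose c := `|f x0| / 2.
have c0 : 0 < c by rewrite divr_gt0 // normr_gt0.
have hn : nbhs (x0 : {ptws nat -> R}) ((f : {ptws nat -> R} -> R) @^-1` [set y | `|f x0 - y| < c]).
  apply: cf; apply/nbhs_ballP; exists c => //= y; by rewrite -ball_normE.
have [m [d d0 H]] := nbhs_cyl hn.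
pose U := ([set x | forall i, (i < m)%N -> `|x i - x0 i| < d] : set (RN R)).
have Uc : forall x, U x -> c <= `|f x|.
  move=> x /H /= h.
  have e : `|f x0| = c + c by rewrite /c -splitr.
  have := ler_normD (f x0 - f x) (f x); rewrite subrK e => h2.
  by move: h => /ltW h; lra.
have mU : mu U = +oo%E by exact: cyl_infinite.
pose g := (EFin \o (f : RN R -> R)).
have mg := proj2 (@measurable_realfun.measurable_EFinP _ (RN R) R setT (f : RN R -> R)) mf'.
have f0 : forall r : \bar R, (0 <= r)%E -> (0 <= (fun x => x `^ p) r)%E.
  by move=> r _; exact: poweR_ge0.
have key : ((c%:E `^ p) * mu (setT `&` [set x | (c%:E <= `|g x|)%E]) <= \int[mu]_(x in setT) (`|g x| `^ p))%E.
  apply: (@le_integral_comp_abse _ (RN R) R mu setT measurableT g c (fun x => x `^ p)%E (measurable_poweR p) f0) => //.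
  move=> x y hx hy xy; apply: gt0_ler_poweR => //.
  - by rewrite (le_trans _ p1).
  - by rewrite in_itv /= leey andbT; move: hx; rewrite inE /= in_itv /= andbT.
  - by rewrite in_itv /= leey andbT; move: hy; rewrite inE /= in_itv /= andbT.
have mS : mu (setT `&` [set x | (c%:E <= `|g x|)%E]) = +oo%E.
  apply/eqP; rewrite eq_le leey /= -mU; apply: le_measure; rewrite ?inE.
  - exact: cyl_measurable.
  - have hm := (@measurable_realfun.emeasurable_fun_c_infty _ (RN R) R setT (fun x => `|g x|)%E measurableT (measurableT_comp (@measurable_realfun.abse_measurable R setT) mg) c%:E).
    exact: hm.
  by move=> x Ux; split => //=; rewrite lee_fin; exact: Uc.
move: key; rewrite mS muleC gt0_mulye; last by apply: poweR_gt0; rewrite lte_fin.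
rewrite leye_eq => /eqP key.
have p0 : p != 0 by rewrite gt_eqF // (lt_le_trans ltr01 p1).
have := poweR_Lnorm mu g p0; rewrite key => h.
have : ('N[mu]_p%:E[g])%E \is a fin_num by rewrite ge0_fin_numE // Lnorm_ge0.
by move/(fin_num_poweR p); rewrite h.
Qed.

Unset Implicit Arguments.

Theorem theoremA8 (R : realType) (mu : {measure set RN R -> \bar R})
  (mu_def : forall A : set (RN R), measurable A -> mu A = mu_star A) :
  (forall (f : (nat -> R) -> R) (x0 : nat -> R),
      continuous (f : {ptws nat -> R} -> R) -> f x0 != 0 ->
      forall p : R, 1 <= p -> ~ ((f : RN R -> R) \in Lfun mu p%:E)) /\
  (forall p : R, 1 <= p -> forall f : (nat -> R) -> R,
      continuous (f : {ptws nat -> R} -> R) ->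
      (f : RN R -> R) \in Lfun mu p%:E -> f = (fun _ => 0)).
Proof.
split; first exact: part1.
move=> p p1 f cf hf; apply/funext => x0; apply/eqP; apply: contraT => fx0.
by have := part1 mu_def cf fx0 p1 hf.
Qed.
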